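(* Let $M$ be a totally ordered finite monoid and $P\subseteq M^3$ an edge selector. Then for every $d\in\mathbb{N}$, there is no bad forest path of length greater than $2$ all of whose members belong to $\mathrm{Reg}_d$.
   Context: For $m$ in a monoid $M$, $J(m)=\{xmy:x,y\in M\}$; $M$ is totally ordered if for all $a,b$, $J(ab)=J(a)$ or $J(ab)=J(b)$. $e\in M$ is idempotent if $e^2=e$. A monoid-labelled graph over $M$ is a tuple $\mathcal{G}=(m,V,E,\lambda)$ with $m\in M$ (the evaluation of $\mathcal{G}$), $V$ a finite vertex set, $E\colon V\times V\to(M^2\to\{\top,\bot\})$ and $\lambda\colon V\to M^2$ such that $\lambda(x)=(l_x,r_x)$ satisfies $l_xr_x=m$ for all $x$. For $a,b\in M$, $a\mathcal{G}b$ has the same vertices, evaluation $amb$, labels $(al_x,r_xb)$ and edge function $(x,y)\mapsto((s,t)\mapsto E(x,y)(sa,bt))$. The downcasting $\mathrm{dc}(\mathcal{G})$ is the graph on $V$ in which distinct $x,y$ are adjacent iff $E(x,y)(1_M,1_M)=\top$. An edge selector is a fixed set $P\subseteq M^3$. The binary product $\mathcal{G}_1\odot\mathcal{G}_2$ of $\mathcal{G}_i=(m_i,V_i,E_i,\lambda_i)$ has vertex set $V_1\sqcup V_2$, evaluation $m_1m_2$, label $(l_x,r_xm_2)$ for $x\in V_1$ with $\lambda_1(x)=(l_x,r_x)$, label $(m_1l_y,r_y)$ for $y\in V_2$ with $\lambda_2(y)=(l_y,r_y)$, edge function $E_1(x,x')(s,m_2t)$ on $V_1$, $E_2(y,y')(sm_1,t)$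 on $V_2$, and for $x\in V_1,y\in V_2$: $E(x,y)(s,t)=E(y,x)(s,t)=\top$ iff $(sl_x,r_xl_y,r_yt)\in P$. This product is associative. For a finite nonempty sequence $\mathcal{G}_1,\dots,\mathcal{G}_n$ all evaluating to the same idempotent $e$, the idempotent product $\bigodot_i\mathcal{G}_i$ is $\mathcal{G}_1\odot\cdots\odot\mathcal{G}_n$. $\mathrm{Reg}_0$ is the class of monoid-labelled graphs with one vertex; $\mathrm{Reg}_{k+1}$ consists of all $\mathcal{G}_1\odot\mathcal{G}_2$ with $\mathcal{G}_1,\mathcal{G}_2\in\mathrm{Reg}_k$ and all idempotent products of finite nonempty sequences in $\mathrm{Reg}_k$ evaluating to a common idempotent. A sequence $\mathcal{G}_1,\dots,\mathcal{G}_n$ all evaluating to an idempotent $e$ (length $n$) is a good forest path if for all $a,b\in M$ there is a sequence $\mathcal{H}_1,\dots,\mathcal{H}_k$ of monoid-labelled graphs evaluating to $e$ and a graph embedding $h$ from $\mathrm{dc}(a(\bigodot_i\mathcal{G}_i)b)$ to $\mathrm{dc}(a(\bigodot_j\mathcal{H}_j)b)$ such that: $h$ maps each vertex $x$ of $\mathcal{G}_i$ to a vertex of some $\mathcal{H}_j$ carrying the same label in $\mathcal{H}_j$ as $x$ has in $\mathcal{G}_i$; $h$ maps $\mathcal{G}_1$ into $\mathcal{H}_1$ and $\mathcal{G}_n$ into $\mathcal{H}_k$; and some $\mathcal{H}_j$ contains no vertex of the image of $h$. Otherwise it is a bad forest path. Graph embeddings are injective maps with $\{h(u),h(v)\}$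 an edge iff $\{u,v\}$ is. *)

(* Defs.v *)
From HB Require Import structures.
From mathcomp Require Import all_boot.
From mathcomp Require Import monoid.

Set Implicit Arguments.
Unset Strict Implicit.
Unset Printing Implicit Defensive.

#[short(type="finMonoidType")]
HB.structure Definition FinMonoid := {M of Monoid M & Finite M}.

Local Open Scope group_scope.

Fixpoint seq_all (T : Type) (p : T -> Prop) (s : seq T) : Prop :=
  match s with [::] => True | x :: s' => p x /\ seq_all p s' end.

Section MLGraphs.
Variable M : finMonoidType.

Definition Jideal (m : M) : {set M} := [set x * m * y | x : M, y : M].

Definition totally_ordered : Prop :=
  forall a b : M, Jideal (a * b) = Jideal a \/ Jideal (a * b) = Jideal b.

Definition idempotent (e : M) : Prop := e * e = e.

(* A (pre-)monoid-labelled graph (m, V, E, lambda); the constraint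
   l_x r_x = m is the separate predicate [mlg_wf] below. *)
Record mlgraph := MLGraph {
  ev   : M;
  vert : finType;
  edge : vert -> vert -> M -> M -> bool;
  lab  : vert -> (M * M)%type
}.

Definition mlg_wf (G : mlgraph) : Prop :=
  forall x : vert G, (lab x).1 * (lab x).2 = ev G.

Definition gscale (a b : M) (G : mlgraph) : mlgraph :=
  @MLGraph (a * ev G * b) (vert G)
    (fun x y s t => edge x y (s * a) (b * t))
    (fun x => (a * (lab x).1, (lab x).2 * b)).

Definition dc_adj (G : mlgraph) (x y : vert G) : bool :=
  (x != y) && edge x y 1 1.

Definition dc_embedding (G H : mlgraph) (h : vert G -> vert H) : Prop :=
  injective h /\ forall u v : vert G, dc_adj (h u) (h v) = dc_adj u v.

Section Product.
Variable P : {set (M * M * M)%type}.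

Definition gprod (G1 G2 : mlgraph) : mlgraph :=
  @MLGraph (ev G1 * ev G2) (vert G1 + vert G2)%type
    (fun u v s t =>
       match u, v with
       | inl x, inl x' => edge x x' s (ev G2 * t)
       | inr y, inr y' => edge y y' (s * ev G1) t
       | inl x, inr y
       | inr y, inl x =>
           (s * (lab x).1, (lab x).2 * (lab y).1, (lab y).2 * t) \in P
       end)
    (fun u => match u with
              | inl x => ((lab x).1, (lab x).2 * ev G2)
              | inr y => (ev G1 * (lab y).1, (lab y).2)
              end).

(* product G0 (.) G1 (.) ... (.) Gk of the nonempty sequence G0 :: Gs
   (bracketed to the right; the product is associative) *)
Fixpoint seqprod (G0 : mlgraph) (Gs : seq mlgraph) : mlgraph :=
  match Gs with
  | [::] => G0
  | G1 :: Gs' => gprod G0 (seqprod G1 Gs')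
  end.

Fixpoint seqprod_idx (G0 : mlgraph) (Gs : seq mlgraph) :
    vert (seqprod G0 Gs) -> nat :=
  match Gs return vert (seqprod G0 Gs) -> nat with
  | [::] => fun _ => 0%N
  | G1 :: Gs' => fun v =>
      match v with
      | inl _ => 0%N
      | inr w => (seqprod_idx w).+1
      end
  end.

(* label of a vertex of the product in its own factor *)
Fixpoint seqprod_lab (G0 : mlgraph) (Gs : seq mlgraph) :
    vert (seqprod G0 Gs) -> (M * M)%type :=
  match Gs return vert (seqprod G0 Gs) -> (M * M)%type with
  | [::] => fun x => lab x
  | G1 :: Gs' => fun v =>
      match v with
      | inl x => lab x
      | inr w => seqprod_lab w
      end
  end.

Fixpoint Reg (d : nat) (G : mlgraph) : Prop :=
  match d with
  | 0%N => mlg_wf G /\ #|vert G| = 1%N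
  | k.+1 =>
      (exists G1 G2 : mlgraph, Reg k G1 /\ Reg k G2 /\ G = gprod G1 G2) \/
      (exists (e : M) (G0 : mlgraph) (Gs : seq mlgraph),
          idempotent e /\
          seq_all (fun H => Reg k H /\ ev H = e) (G0 :: Gs) /\
          G = seqprod G0 Gs)
  end.

Definition idem_seq (e : M) (G0 : mlgraph) (Gs : seq mlgraph) : Prop :=
  idempotent e /\ seq_all (fun G => mlg_wf G /\ ev G = e) (G0 :: Gs).

Definition good_forest_path (e : M) (G0 : mlgraph) (Gs : seq mlgraph) : Prop :=
  idem_seq e G0 Gs /\
  forall a b : M,
    exists (H0 : mlgraph) (Hs : seq mlgraph),
      seq_all (fun H => mlg_wf H /\ ev H = e) (H0 :: Hs) /\
      exists h : vert (gscale a b (seqprod G0 Gs)) ->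
                 vert (gscale a b (seqprod H0 Hs)),
        dc_embedding h /\
        (forall v, seqprod_lab (h v) = seqprod_lab v) /\
        (forall v, seqprod_idx v = 0%N -> seqprod_idx (h v) = 0%N) /\
        (forall v, seqprod_idx v = size Gs -> seqprod_idx (h v) = size Hs) /\
        (exists j, (j <= size Hs)%N /\ forall v, seqprod_idx (h v) <> j).

Definition bad_forest_path (e : M) (G0 : mlgraph) (Gs : seq mlgraph) : Prop :=
  idem_seq e G0 Gs /\ ~ good_forest_path e G0 Gs.

End Product.
End MLGraphs.

(* Main.v *)
Require Import Defs.
From HB Require Import structures.
From mathcomp Require Import all_boot.
From mathcomp Require Import monoid.
Set Implicit Arguments.
Unset Strict Implicit.
Unset Printing Implicit Defensive.
Local Open Scope group_scope.

Section Alg.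
Variable M : finMonoidType.

Lemma pow_rep (A : M) : exists p q, (0 < p < q)%N /\ A ^+ p = A ^+ q.
Proof.
pose f (i : 'I_#|M|.+1) := A ^+ i.+1.
case/boolP: [exists i, exists j, (i != j) && (f i == f j)].
  case/existsP=> i /existsP [j /andP [ij /eqP fij]].
  case: (ltngtP i j) => [lt|gt|eq].
  - by exists i.+1, j.+1; split => //=; rewrite ltnS.
  - by exists j.+1, i.+1; split => //=; rewrite ltnS.
  - by move: ij; rewrite (val_inj eq) eqxx.
move=> H; exfalso.
have inj : injective f.
  move=> i j fij; apply/eqP; apply: contraR H => ij.
  by apply/existsP; exists i; apply/existsP; exists j; rewrite ij fij eqxx.
by move: (leq_card f inj); rewrite card_ord ltnn.
Qed.

Lemma pow_idem (A : M) : exists k, (0 < k)%N /\ A ^+ k * A ^+ k = A ^+ k.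
Proof.
have [p [q [/andP [p0 pq] Apq]]] := pow_rep A.
set d := (q - p)%N.
have d0 : (0 < d)%N by rewrite subn_gt0.
have step : forall n, (p <= n)%N -> A ^+ (n + d) = A ^+ n.
  move=> n pn; have pd : (p + d = q)%N by rewrite /d subnKC // ltnW.
  by rewrite -(subnK pn) -addnA pd !expgnDr Apq.
have steps : forall t n, (p <= n)%N -> A ^+ (n + t * d) = A ^+ n.
  elim=> [|t IH] n pn; first by rewrite mul0n addn0.
  rewrite mulSn (addnC d) addnA step ?IH //.
  by apply: leq_trans pn (leq_addr _ _).
exists (p * d)%N; split; first by rewrite muln_gt0 p0.
rewrite -expgnDr steps //.
by rewrite -{1}(muln1 p) leq_mul2l d0 orbT.
Qed.

Lemma iter_sand (x b B : M) : b = x * b * B -> forall n, b = x ^+ n * b * B ^+ n.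
Proof.
move=> H; elim=> [|n IH]; first by rewrite !expg0 mul1g mulg1.
by rewrite {1}IH {1}H expgSr expgS !mulgA.
Qed.

Lemma stab_r (a b u x y : M) : a = b * u -> b = x * a * y -> exists v, b = a * v.
Proof.
move=> Ha Hb.
have H : b = x * b * (u * y) by rewrite {1}Hb Ha !mulgA.
have [k [k0 Bk]] := pow_idem (u * y).
have Hk := iter_sand H k.
have bB : b * (u * y) ^+ k = b.
  by rewrite {2}Hk {1}Hk -!mulgA Bk.
case: k k0 Bk Hk bB => // k _ _ _ bB.
exists (y * (u * y) ^+ k).
by rewrite -{1}bB expgS !mulgA Ha.
Qed.

Lemma stab_l (a b u x y : M) : a = u * b -> b = x * a * y -> exists v, b = v * a.
Proof.
move=> Ha Hb.
have H : b = (x * u) * b * y by rewrite {1}Hb Ha !mulgA.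
have [k [k0 Bk]] := pow_idem (x * u).
have Hk := iter_sand H k.
have bB : (x * u) ^+ k * b = b.
  by rewrite {2}Hk {1}Hk !mulgA Bk.
case: k k0 Bk Hk bB => // k _ _ _ bB.
exists ((x * u) ^+ k * x).
by rewrite -{1}bB expgSr -!mulgA Ha.
Qed.

Lemma in_J (m : M) : m \in Jideal m.
Proof. by apply/imset2P; exists 1 1; rewrite ?inE ?mul1g ?mulg1. Qed.

Lemma J_mem (m n : M) : n \in Jideal m -> exists x y, n = x * m * y.
Proof. by case/imset2P=> x y _ _ ->; exists x, y. Qed.

Variable e : M.
Hypothesis He : e * e = e.
Hypothesis tot : totally_ordered M.

Lemma dichotomy (L R : M) : L * R = e -> e * L = L \/ R * e = R.
Proof.
move=> LR.
case: (tot L R); rewrite LR => HJ.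
- left. have := in_J L; rewrite -HJ => /J_mem [x [y Lxy]].
  have [v ->] := stab_r (esym LR) Lxy.
  by rewrite mulgA He.
- right. have := in_J R; rewrite -HJ => /J_mem [x [y Rxy]].
  have [v ->] := stab_l (esym LR) Rxy.
  by rewrite -mulgA He.
Qed.

Lemma key (Lx Rx Ly Ry q : M) :
  Lx * Rx = e -> Ly * Ry = e -> Lx * q = Ly -> q * Ry = Rx ->
  e * Ly = Ly -> e * Lx != Lx -> q = Rx * Ly.
Proof.
move=> ex ey Lq qR lY nlX.
case: (tot Lx q); rewrite Lq => HJ.
- exfalso; move/negP: nlX; apply.
  have := in_J Lx; rewrite -HJ => /J_mem [x [y Lxy]].
  have Lxy' : Lx = x * e * (Ly * y) by rewrite Lxy -{1}lY !mulgA.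
  have [v ->] := stab_r (esym ex) Lxy'.
  by rewrite mulgA He.
- have := in_J q; rewrite -HJ => /J_mem [x [y qxy]].
  have [v vq] := stab_l (esym Lq) qxy.
  by rewrite -qR vq -{1}lY -ey !mulgA.
Qed.

End Alg.
Section Gr.
Variable M : finMonoidType.
Variable P : {set (M * M * M)%type}.

Definition linear (G : mlgraph M) : Prop :=
  exists (lt : vert G -> vert G -> Prop) (mid : vert G -> vert G -> M),
    (forall x y, x != y -> lt x y \/ lt y x) /\
    (forall x y, lt x y ->
       (lab x).1 * mid x y = (lab y).1 /\ mid x y * (lab y).2 = (lab x).2 /\
       forall s t,
         edge x y s t = ((s * (lab x).1, mid x y, (lab y).2 * t) \in P) /\
         edge y x s t = ((s * (lab x).1, mid x y, (lab y).2 * t) \in P)).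

Lemma gprod_wf G1 G2 : mlg_wf G1 -> mlg_wf G2 -> mlg_wf (gprod P G1 G2).
Proof.
move=> w1 w2 [x|y] /=; first by rewrite mulgA w1.
by rewrite -mulgA w2.
Qed.

Lemma gprod_lin G1 G2 : mlg_wf G1 -> mlg_wf G2 -> linear G1 -> linear G2 ->
  linear (gprod P G1 G2).
Proof.
move=> w1 w2 [lt1 [mid1 [t1 H1]]] [lt2 [mid2 [t2 H2]]].
exists (fun u v : vert G1 + vert G2 => match u, v with
  | inl x, inl x' => lt1 x x' | inr y, inr y' => lt2 y y'
  | inl _, inr _ => True | inr _, inl _ => False end).
exists (fun u v : vert G1 + vert G2 => match u, v with
  | inl x, inl x' => mid1 x x' | inr y, inr y' => mid2 y y'
  | inl x, inr y => (lab x).2 * (lab y).1 | _, _ => 1 end).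
split.
  move=> [x|y] [x'|y'] /= neq.
  - apply: t1; apply: contra neq => /eqP -> //.
  - by left.
  - by right.
  - apply: t2; apply: contra neq => /eqP -> //.
move=> [x|y] [x'|y'] //= Hlt.
- have [h1 [h2 h3]] := H1 _ _ Hlt.
  split; first exact h1. split; first by rewrite mulgA h2.
  move=> s t; have [-> ->] := h3 s (ev G2 * t); by rewrite mulgA.
- split; first by rewrite mulgA w1.
  split; first by rewrite -mulgA w2.
  by [].
- have [h1 [h2 h3]] := H2 _ _ Hlt.
  split; first by rewrite -mulgA h1. split; first exact h2.
  move=> s t; have [-> ->] := h3 (s * ev G1) t; by rewrite mulgA.
Qed.

Lemma seq_all_impl (T : Type) (p q : T -> Prop) s :
  (forall x, p x -> q x) -> seq_all p s -> seq_all q s.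
Proof. move=> pq; elim: s => //= x s IH [px ps]; split; auto. Qed.

Lemma seqprod_lin G0 Gs :
  seq_all (fun H => mlg_wf H /\ linear H) (G0 :: Gs) ->
  mlg_wf (seqprod P G0 Gs) /\ linear (seqprod P G0 Gs).
Proof.
elim: Gs G0 => [|G1 Gs IH] G0 /= [[w0 l0] rest] //.
have [w1 l1] := IH G1 rest.
split; [exact: gprod_wf | exact: gprod_lin].
Qed.

Lemma Reg_lin d G : Reg P d G -> mlg_wf G /\ linear G.
Proof.
elim: d G => [|d IH] G /=.
  move=> [w c]; split => //.
  have [x0 Hx0] := fintype1 c.
  exists (fun _ _ => False), (fun _ _ => 1); split => //.
  by move=> x y; rewrite (Hx0 x) (Hx0 y) eqxx.
case=> [[G1 [G2 [r1 [r2 ->]]]] | [e [G0 [Gs [_ [Hs ->]]]]]].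
  have [w1 l1] := IH _ r1; have [w2 l2] := IH _ r2.
  split; [exact: gprod_wf | exact: gprod_lin].
apply: seqprod_lin; move: Hs.
apply: (@seq_all_impl _ (fun H => Reg P d H /\ ev H = e) _ (G0 :: Gs)) => H [rH _]; exact: IH.
Qed.


Lemma ev_seqprod (e : M) G0 Gs : e * e = e ->
  seq_all (fun H => mlg_wf H /\ ev H = e) (G0 :: Gs) -> ev (seqprod P G0 Gs) = e.
Proof.
move=> He; elim: Gs G0 => [|G1 Gs IH] G0 /= [[_ e0] rest] //.
by rewrite e0 (IH _ rest) He.
Qed.

End Gr.

Definition Emp (M : finMonoidType) (e : M) : mlgraph M :=
  @MLGraph M e void (fun x _ _ _ => match x with end) (fun x => match x with end).

Theorem lemma4p5 (M : finMonoidType) (P : {set (M * M * M)%type}) :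
  totally_ordered M ->
  forall (d : nat) (e : M) (G0 : mlgraph M) (Gs : seq (mlgraph M)),
    seq_all (Reg P d) (G0 :: Gs) ->
    (2 < (size Gs).+1)%N ->
    ~ bad_forest_path P e G0 Gs.
Proof.
move=> tot d e G0 Gs HReg Hsize [Hidem Hng]; apply: Hng; split => // a b.
case: Gs HReg Hsize Hidem => [|G1 [|G2 Gs']] // HReg _ Hidem.
have [He Hall] := Hidem.
move: (Hall) => /= [[w0 e0] [[w1 e1] Hrest]].
have eR : ev (seqprod P G2 Gs') = e := ev_seqprod P He Hrest.
move: HReg => /= [_ [HR1 _]].
have [_ [lt [mid [tot1 Hlin]]]] := Reg_lin HR1.
pose leftb := fun y : vert G1 => e * (lab y).1 == (lab y).1.
have wE : mlg_wf (Emp e) by case.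
exists G0, [:: G1, Emp e, G1, G2 & Gs'].
split.
  exact: (conj (conj w0 e0) (conj (conj w1 e1) (conj (conj wE erefl) (conj (conj w1 e1) Hrest)))).
pose h := fun v : vert G0 + (vert G1 + vert (seqprod P G2 Gs')) => (match v with
 | inl x => inl x
 | inr (inl y) => if leftb y then inr (inr (inr (inl y))) else inr (inl y)
 | inr (inr w) => inr (inr (inr (inr w))) end
   : vert G0 + (vert G1 + (void + (vert G1 + vert (seqprod P G2 Gs'))))).
have hinj : injective h.
  by move=> [x|[y|w]] [x'|[y'|w']]; rewrite /h /=; do ?case: ifP => _; congruence.
exists h.
split.
  split => // u v.
  rewrite /dc_adj (inj_eq hinj); congr (_ && _).
  have He' : e * e = e := He.
  have xee : forall z, z * e * e = z * e by move=> z; rewrite -mulgA He'.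
  have lE : forall y (z : M), leftb y = true -> z * e * (lab y).1 = z * (lab y).1.
    by move=> y z /eqP ly; rewrite -mulgA ly.
  have rE : forall y (z : M), leftb y = false -> (lab y).2 * e * z = (lab y).2 * z.
    move=> y z /negbT ny; have := dichotomy He' tot (etrans (w1 y) e1).
    by case=> [ly|-> //]; move: ny; rewrite /leftb ly eqxx.
  have mixed : forall y y', leftb y = true -> leftb y' = false -> forall s t,
     edge y y' s t = ((s * (lab y').1, (lab y').2 * (lab y).1, (lab y).2 * t) \in P) /\
     edge y' y s t = ((s * (lab y').1, (lab y').2 * (lab y).1, (lab y).2 * t) \in P).
    move=> y y' ly ny' s t.
    have neq : y != y' by apply/eqP => Eyy; move: ny'; rewrite -Eyy ly.
    case: (tot1 _ _ neq) => Hl.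
      exfalso; have [h1 _] := Hlin _ _ Hl.
      move: ny'; rewrite /leftb -h1 mulgA (eqP ly) eqxx.
      by [].
    have [h1 [h2 h3]] := Hlin _ _ Hl.
    have := key He' tot (etrans (w1 y') e1) (etrans (w1 y) e1) h1 h2 (eqP ly) (negbT ny').
    move=> midE; have [E1 E2] := h3 s t; by rewrite E1 E2 midE.
  move: u v => [x|[y|w]] [x'|[y'|w']]; rewrite /h /=.
  all: try (case: ifP => ly); try (case: ifP => ly').
  all: rewrite /= ?e0 ?e1 ?eR ?mulg1 ?mul1g.
  all: try (rewrite ?mulgA ?He' ?xee; done).
  all: try (rewrite ?mulgA ?He' ?xee; try rewrite (lE _ _ ly); try rewrite (lE _ _ ly');
            try rewrite (rE _ _ ly); try rewrite (rE _ _ ly'); done).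
  all: try (rewrite (proj1 (mixed _ _ ly ly' _ _)); rewrite ?mulgA ?He' ?xee; try rewrite (lE _ _ ly); done).
  all: try (rewrite (proj2 (mixed _ _ ly' ly _ _)); rewrite ?mulgA ?He' ?xee; try rewrite (lE _ _ ly'); done).
  all: try (rewrite (proj1 (mixed _ _ ly' ly _ _)); rewrite ?mulgA ?He' ?xee; try rewrite (lE _ _ ly'); done).
  all: try (rewrite (proj2 (mixed _ _ ly ly' _ _)); rewrite ?mulgA ?He' ?xee; try rewrite (lE _ _ ly); done).
split.
  by move=> [x|[y|w]] //; rewrite /h /=; case: ifP.
split.
  by move=> [x|[y|w]].
split.
  move=> [x|[y|w]] //= [Hw]; rewrite /h /=.
  by rewrite Hw.
exists 2%N; split => //.
by move=> [x|[y|w]]; rewrite /h /= //; case: ifP.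
Qed.
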